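(* Fix device $n$, a slot $t$ in frame $k$ with freezing percentage $\gamma_n^k\in[0,1]$, control parameter $V\ge0$, queue value $Q_n^{kT}>0$ and observed channel gain $h_n^t>0$, and assume $\tau_n^{\mathrm{cmp},t}<\tau_0$. Consider the per-slot problem $\min_{0\le p_n^t\le\overline{P}_n}\ VX_n^t+Q_n^{kT}E_n^t$. An optimal transmit power is $$p_n^{t,*}=\begin{cases}p_{n,\min}^t,&\text{if }p_{n,\min}^t\le p_{n,\max}^k,\\0,&\text{otherwise,}\end{cases}$$ where $$p_{n,\min}^t=\frac{N_0}{h_n^t}\Big(2^{\frac{(1-\gamma_n^k)S}{W(\tau_0-\tau_n^{\mathrm{cmp},t})}}-1\Big),\qquad p_{n,\max}^k=\Big[\frac{(VB_n\lambda-e_n^{\mathrm{cmp}}Q_n^{kT})(1-\gamma_n^k)}{Q_n^{kT}(\tau_0-\tau_n^{\mathrm{cmp},k})}\Big]_0^{\overline{P}_n},$$ with $[x]_a^b=\min\{\max\{x,a\},b\}$, $e_n^{\mathrm{cmp}}=\frac{\alpha_nc_nB_nf_n^2}{2}$, and $\tau_n^{\mathrm{cmp},k}=\tau_n^{\mathrm{cmp},t}$ the (frame-constant) computation latency.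
   Context: Device $n$ with $B_n$ training samples, CPU frequency $f_n$, $c_n$ cycles per sample and effective capacitance $\alpha_n$ trains with a fraction $\gamma_n^k$ of its parameters frozen: computation latency $\tau_n^{\mathrm{cmp},t}=(1-\gamma_n^k)c_nB_n/f_n$ and computation energy $E_n^{\mathrm{cmp},t}=\frac{\alpha_n}{2}(1-\gamma_n^k)c_nB_nf_n^2$. With transmit power $p$, bandwidth $W$, noise power $N_0$, channel gain $h_n^t$, the rate is $r=W\log_2(1+ph_n^t/N_0)$, upload latency $\tau_n^{\mathrm{com},t}=(1-\gamma_n^k)S/r$ and communication energy $E_n^{\mathrm{com},t}=p(1-\gamma_n^k)S/r$, where $S$ is the full gradient size in bits. The upload succeeds ($\mathbb{1}_n^t=1$) iff $\tau_n^{\mathrm{cmp},t}+\tau_n^{\mathrm{com},t}\le\tau_0$ for a per-round latency $\tau_0$; $\overline{P}_n$ is the peak power. The penalty is $X_n^t=\lambda\mathbb{1}_n^tB_n(\gamma_n^k-1)$ with constant $\lambda>0$. For $p>0$ the energy is $E_n^t=E_n^{\mathrm{cmp},t}+E_n^{\mathrm{com},t}$; choosing $p=0$ means the device drops out of training in this slot, so $\mathbb{1}_n^t=0$, $X_n^t=0$ and $E_n^t=0$. *)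

(* Defs.v *)
From Stdlib Require Import Reals.
Open Scope R_scope.

(* Static system parameters of device n (frame/slot indices are fixed). *)
Record Params := mkParams {
  p_B : R;      (* number of training samples B_n *)
  p_f : R;      (* CPU frequency f_n *)
  p_c : R;      (* cycles per sample c_n *)
  p_alpha : R;  (* effective capacitance alpha_n *)
  p_W : R;      (* bandwidth *)
  p_N0 : R;     (* noise power *)
  p_S : R;      (* full gradient size in bits *)
  p_tau0 : R;   (* per-round latency *)
  p_Pbar : R;   (* peak power *)
  p_lam : R
}.

Definition log2 (x : R) : R := ln x / ln 2.

Definition rate (P : Params) (p h : R) : R := p_W P * log2 (1 + p * h / p_N0 P).

Definition tau_cmp (P : Params) (g : R) : R := (1 - g) * p_c P * p_B P / p_f P.
Definition E_cmp (P : Params) (g : R) : R :=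
  p_alpha P / 2 * (1 - g) * p_c P * p_B P * (p_f P) ^ 2.

Definition tau_com (P : Params) (g p h : R) : R := (1 - g) * p_S P / rate P p h.
Definition E_com (P : Params) (g p h : R) : R := p * (1 - g) * p_S P / rate P p h.

Definition indic (P : Params) (g p h : R) : R :=
  if Rle_dec (tau_cmp P g + tau_com P g p h) (p_tau0 P) then 1 else 0.

(* penalty X and energy E; p = 0 means dropping out: indicator 0, X = 0, E = 0 *)
Definition Xpen (P : Params) (g p h : R) : R :=
  if Req_EM_T p 0 then 0 else p_lam P * indic P g p h * p_B P * (g - 1).
Definition Energy (P : Params) (g p h : R) : R :=
  if Req_EM_T p 0 then 0 else E_cmp P g + E_com P g p h.

Definition obj (P : Params) (V Q g h p : R) : R :=
  V * Xpen P g p h + Q * Energy P g p h.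

Definition clip (x a b : R) : R := Rmin (Rmax x a) b.

Definition e_cmp (P : Params) : R := p_alpha P * p_c P * p_B P * (p_f P) ^ 2 / 2.

Definition p_min (P : Params) (g h : R) : R :=
  p_N0 P / h * (Rpower 2 ((1 - g) * p_S P / (p_W P * (p_tau0 P - tau_cmp P g))) - 1).

Definition p_max (P : Params) (V Q g : R) : R :=
  clip ((V * p_B P * p_lam P - e_cmp P * Q) * (1 - g) / (Q * (p_tau0 P - tau_cmp P g)))
       0 (p_Pbar P).

Definition p_opt (P : Params) (V Q g h : R) : R :=
  if Rle_dec (p_min P g h) (p_max P V Q g) then p_min P g h else 0.

(* Main.v *)
Require Import Defs.
From Stdlib Require Import Reals Lra Psatz.
Open Scope R_scope.

Lemma exp_key u v : 0 < u -> u <= v -> v * (exp u - 1) <= u * (exp v - 1).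
Proof.
  intros Hu Huv.
  assert (h1 := exp_ineq1_le (v - u)).
  assert (h2 := exp_ineq1_le (- u)).
  assert (e1 : exp v = exp u * exp (v - u)) by (rewrite <- exp_plus; f_equal; ring).
  assert (e2 : exp u * exp (- u) = 1) by (rewrite <- exp_plus, <- exp_0; f_equal; ring).
  assert (pu := exp_pos u).
  assert (h3 : exp u - 1 <= u * exp u) by nra.
  assert (h4 : exp v >= exp u * (1 + (v - u))) by nra.
  nra.
Qed.

Lemma ln_key k p1 p2 : 0 < k -> 0 < p1 -> p1 <= p2 ->
  p1 * ln (1 + k * p2) <= p2 * ln (1 + k * p1).
Proof.
  intros Hk H1 H12.
  set (u := ln (1 + k * p1)). set (v := ln (1 + k * p2)).
  assert (eu : exp u = 1 + k * p1) by (apply exp_ln; nra).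
  assert (ev : exp v = 1 + k * p2) by (apply exp_ln; nra).
  assert (Hu : 0 < u).
  { unfold u; rewrite <- ln_1; apply ln_increasing; nra. }
  assert (Huv : u <= v).
  { destruct (Req_dec p1 p2) as [->|Hne]; [unfold u, v; lra|].
    apply Rlt_le; unfold u, v; apply ln_increasing; nra. }
  assert (K := exp_key u v Hu Huv). rewrite eu, ev in K. nra.
Qed.

Lemma ln2_pos : 0 < ln 2.
Proof. rewrite <- ln_1; apply ln_increasing; lra. Qed.

Lemma rate_pos P p h : 0 < p_W P -> 0 < p_N0 P -> 0 < h -> 0 < p -> 0 < rate P p h.
Proof.
  intros HW HN Hh Hp. unfold rate, log2.
  assert (0 < p * h / p_N0 P) by (apply Rdiv_lt_0_compat; nra).
  assert (0 < ln (1 + p * h / p_N0 P)) by (rewrite <- ln_1; apply ln_increasing; lra).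
  assert (L := ln2_pos).
  apply Rmult_lt_0_compat; [lra|]. apply Rdiv_lt_0_compat; lra.
Qed.

Lemma rate_lt P p1 p2 h : 0 < p_W P -> 0 < p_N0 P -> 0 < h -> 0 < p1 -> p1 < p2 ->
  rate P p1 h < rate P p2 h.
Proof.
  intros HW HN Hh Hp H12. unfold rate, log2.
  assert (L := ln2_pos).
  apply Rmult_lt_compat_l; [lra|]. unfold Rdiv; apply Rmult_lt_compat_r.
  - apply Rinv_0_lt_compat; lra.
  - apply ln_increasing.
    + assert (0 < p1 * h / p_N0 P) by (apply Rdiv_lt_0_compat; nra). lra.
    + apply Rplus_lt_compat_l. unfold Rdiv. apply Rmult_lt_compat_r.
      * apply Rinv_0_lt_compat; lra.
      * nra.
Qed.

Lemma rate_le P p1 p2 h : 0 < p_W P -> 0 < p_N0 P -> 0 < h -> 0 < p1 -> p1 <= p2 ->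
  rate P p1 h <= rate P p2 h.
Proof.
  intros HW HN Hh Hp H12. destruct H12 as [H|<-]; [apply Rlt_le; apply rate_lt; auto | lra].
Qed.

Lemma ratio_mono P p1 p2 h : 0 < p_W P -> 0 < p_N0 P -> 0 < h -> 0 < p1 -> p1 <= p2 ->
  p1 / rate P p1 h <= p2 / rate P p2 h.
Proof.
  intros HW HN Hh Hp H12.
  assert (r1 := rate_pos P p1 h HW HN Hh Hp).
  assert (r2 := rate_pos P p2 h HW HN Hh ltac:(lra)).
  assert (K := ln_key (h / p_N0 P) p1 p2 ltac:(apply Rdiv_lt_0_compat; lra) Hp H12).
  assert (L := ln2_pos).
  unfold rate, log2 in *.
  replace (1 + p1 * h / p_N0 P) with (1 + h / p_N0 P * p1) by (unfold Rdiv; ring).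
  replace (1 + p2 * h / p_N0 P) with (1 + h / p_N0 P * p2) by (unfold Rdiv; ring).
  replace (1 + p1 * h / p_N0 P) with (1 + h / p_N0 P * p1) in r1 by (unfold Rdiv; ring).
  replace (1 + p2 * h / p_N0 P) with (1 + h / p_N0 P * p2) in r2 by (unfold Rdiv; ring).
  assert (0 < ln (1 + h / p_N0 P * p1)).
  { rewrite <- ln_1; apply ln_increasing; [lra|].
    assert (0 < h / p_N0 P) by (apply Rdiv_lt_0_compat; lra). nra. }
  assert (0 < ln (1 + h / p_N0 P * p2)).
  { rewrite <- ln_1; apply ln_increasing; [lra|].
    assert (0 < h / p_N0 P) by (apply Rdiv_lt_0_compat; lra). nra. }
  clear r1 r2.
  revert K H H0.
  generalize (ln (1 + h / p_N0 P * p1)) as L1.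
  generalize (ln (1 + h / p_N0 P * p2)) as L2.
  intros L2 L1 K H0 H1.
  replace (p1 / (p_W P * (L1 / ln 2))) with (p1 * ln 2 / p_W P / L1) by (field; lra).
  replace (p2 / (p_W P * (L2 / ln 2))) with (p2 * ln 2 / p_W P / L2) by (field; lra).
  apply (Rmult_le_reg_r (L1 * L2)); [nra|].
  replace (p1 * ln 2 / p_W P / L1 * (L1 * L2)) with (ln 2 / p_W P * (p1 * L2)) by (field; lra).
  replace (p2 * ln 2 / p_W P / L2 * (L1 * L2)) with (ln 2 / p_W P * (p2 * L1)) by (field; lra).
  apply Rmult_le_compat_l; [apply Rlt_le, Rdiv_lt_0_compat; lra | lra].
Qed.

Lemma obj_nz P V Q g h p : p <> 0 ->
  obj P V Q g h p = V * (p_lam P * indic P g p h * p_B P * (g - 1))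
                    + Q * (E_cmp P g + E_com P g p h).
Proof.
  intro Hp. unfold obj, Xpen, Energy.
  destruct (Req_EM_T p 0); [contradiction|reflexivity].
Qed.

Lemma obj_0 P V Q g h : obj P V Q g h 0 = 0.
Proof.
  unfold obj, Xpen, Energy. destruct (Req_EM_T 0 0); [ring|congruence].
Qed.

Theorem proposition1 (prm : Params) (V Q g h : R) :
  0 < p_B prm -> 0 < p_f prm -> 0 < p_c prm -> 0 < p_alpha prm -> 0 < p_W prm -> 0 < p_N0 prm ->
  0 < p_S prm -> 0 < p_Pbar prm -> 0 < p_lam prm ->
  0 <= g <= 1 -> 0 <= V -> 0 < Q -> 0 < h ->
  tau_cmp prm g < p_tau0 prm ->
  (0 <= p_opt prm V Q g h <= p_Pbar prm) /\
  (forall p, 0 <= p <= p_Pbar prm -> obj prm V Q g h (p_opt prm V Q g h) <= obj prm V Q g h p).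
Proof.
  intros HB Hf Hc Ha HW HN HS HP Hl Hg HV HQ Hh Htau.
  assert (Hpmax0 : 0 <= p_max prm V Q g).
  { unfold p_max, clip. apply Rmin_glb; [apply Rmax_r | lra]. }
  assert (HpmaxP : p_max prm V Q g <= p_Pbar prm).
  { unfold p_max, clip. apply Rmin_r. }
  destruct (Req_dec g 1) as [Hg1|Hg1].
  -
    subst g.
    assert (Hpm : p_min prm 1 h = 0).
    { unfold p_min. replace ((1 - 1) * p_S prm / (p_W prm * (p_tau0 prm - tau_cmp prm 1))) with 0
        by (unfold Rdiv; ring).
      rewrite Rpower_O by lra. ring. }
    assert (Hopt : p_opt prm V Q 1 h = 0).
    { unfold p_opt. rewrite Hpm. destruct (Rle_dec 0 (p_max prm V Q 1)); reflexivity. }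
    rewrite Hopt. split; [lra|].
    intros p Hp. rewrite obj_0.
    destruct (Req_dec p 0) as [->|Hp0]; [rewrite obj_0; lra|].
    rewrite obj_nz by auto.
    unfold E_cmp, E_com. unfold Rdiv. ring_simplify. lra.
  - set (a := 1 - g).
    assert (Ha0 : 0 < a) by (unfold a; lra).
    set (D := p_tau0 prm - tau_cmp prm g).
    assert (HD : 0 < D) by (unfold D; lra).
    set (T := a * p_S prm / (p_W prm * D)).
    assert (HT : 0 < T).
    { unfold T. apply Rdiv_lt_0_compat; [nra|nra]. }
    set (pm := p_min prm g h).
    assert (HR : 1 < Rpower 2 T).
    { unfold Rpower. rewrite <- exp_0. apply exp_increasing.
      assert (L := ln2_pos). nra. }
    assert (Hpm : 0 < pm).
    { unfold pm, p_min. fold a D. fold T.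
      apply Rmult_lt_0_compat; [apply Rdiv_lt_0_compat; lra | lra]. }
    assert (Hratepm : rate prm pm h = a * p_S prm / D).
    { unfold rate, log2.
      replace (1 + pm * h / p_N0 prm) with (Rpower 2 T).
      2:{ unfold pm, p_min. fold a D. fold T. field. split; lra. }
      unfold Rpower. rewrite ln_exp.
      assert (L := ln2_pos). unfold T. field. split; lra. }
    assert (HEc : E_cmp prm g = a * e_cmp prm).
    { unfold E_cmp, e_cmp, a. field. }
    assert (Hobj : forall p, 0 < p -> obj prm V Q g h p =
        - V * p_lam prm * p_B prm * a * indic prm g p h
        + Q * (a * e_cmp prm + a * p_S prm * (p / rate prm p h))).
    { intros p Hp0. rewrite obj_nz by lra. rewrite HEc. unfold E_com, a.
      unfold Rdiv. ring. }
    assert (Hind01 : forall p, 0 <= indic prm g p h <= 1).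
    { intro p. unfold indic. destruct (Rle_dec _ _); lra. }
    assert (Hind1 : forall p, pm <= p -> indic prm g p h = 1).
    { intros p Hp. unfold indic. destruct (Rle_dec _ _) as [_|Hn]; [reflexivity|].
      exfalso; apply Hn.
      assert (Hr := rate_le prm pm p h HW HN Hh Hpm Hp).
      rewrite Hratepm in Hr.
      assert (0 < a * p_S prm / D) by (apply Rdiv_lt_0_compat; nra).
      assert (tau_com prm g p h <= D).
      { unfold tau_com. fold a.
        apply (Rmult_le_reg_r (rate prm p h)); [lra|].
        unfold Rdiv. rewrite Rmult_assoc, Rinv_l by lra.
        unfold Rdiv in Hr. 
        apply (Rmult_le_compat_l D) in Hr; [|lra].
        replace (D * (a * p_S prm * / D)) with (a * p_S prm) in Hr by (field; lra).
        lra. }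
      unfold D in *. lra. }
    assert (Hind0 : forall p, 0 < p -> p < pm -> indic prm g p h = 0).
    { intros p Hp0 Hp. unfold indic. destruct (Rle_dec _ _) as [Hle|_]; [|reflexivity].
      exfalso.
      assert (Hr := rate_lt prm p pm h HW HN Hh Hp0 Hp).
      rewrite Hratepm in Hr.
      assert (Hrp := rate_pos prm p h HW HN Hh Hp0).
      assert (tau_com prm g p h > D).
      { unfold tau_com. fold a.
        apply (Rmult_lt_reg_r (rate prm p h)); [lra|].
        unfold Rdiv. rewrite Rmult_assoc, Rinv_l by lra.
        unfold Rdiv in Hr.
        apply (Rmult_lt_compat_l D) in Hr; [|lra].
        replace (D * (a * p_S prm * / D)) with (a * p_S prm) in Hr by (field; lra).
        lra. }
      unfold D in *. lra. }
    assert (Hecmp : 0 <= e_cmp prm).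
    { unfold e_cmp. assert (0 < p_f prm ^ 2) by (apply pow_lt; lra).
      apply Rlt_le, Rdiv_lt_0_compat; [|lra].
      repeat apply Rmult_lt_0_compat; lra. }
    assert (Hratio_nn : forall p, 0 < p -> 0 <= p / rate prm p h).
    { intros p Hp0. apply Rlt_le, Rdiv_lt_0_compat; auto. apply rate_pos; auto. }
    assert (Hbelow : forall p, 0 <= p -> p < pm -> 0 <= obj prm V Q g h p).
    { intros p Hp0 Hp. destruct (Req_dec p 0) as [->|Hne]; [rewrite obj_0; lra|].
      rewrite Hobj by lra. rewrite Hind0 by lra.
      assert (Hq := Hratio_nn p ltac:(lra)).
      assert (0 <= a * p_S prm * (p / rate prm p h)) by (apply Rmult_le_pos; nra).
      assert (0 <= a * e_cmp prm) by (apply Rmult_le_pos; lra).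
      rewrite Rmult_0_r, Rplus_0_l. apply Rmult_le_pos; lra. }
    set (Opm := a * (Q * e_cmp prm - V * p_B prm * p_lam prm) + Q * pm * D).
    assert (Hobjpm : obj prm V Q g h pm = Opm).
    { rewrite Hobj by lra. rewrite Hind1 by lra. rewrite Hratepm.
      unfold Opm. field. split; lra. }
    assert (Habove : forall p, pm <= p -> Opm <= obj prm V Q g h p).
    { intros p Hp. rewrite <- Hobjpm. rewrite !Hobj by lra. rewrite !Hind1 by lra.
      assert (M := ratio_mono prm pm p h HW HN Hh Hpm Hp).
      assert (0 <= Q * (a * p_S prm)) by (apply Rmult_le_pos; nra).
      apply Rplus_le_compat_l, Rmult_le_compat_l; [lra|].
      apply Rplus_le_compat_l, Rmult_le_compat_l; [nra|exact M]. }
    set (x := (V * p_B prm * p_lam prm - e_cmp prm * Q) * (1 - g) / (Q * (p_tau0 prm - tau_cmp prm g))).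
    assert (Hx : Opm <= 0 <-> pm <= x).
    { assert (QD : 0 < Q * D) by nra.
      assert (EO : Opm = Q * D * (pm - x)).
      { unfold Opm, x. fold a D. field. split; lra. }
      rewrite EO. clearbody Opm x pm a D. split; intro Hh0.
      - destruct (Rle_lt_dec pm x) as [Hq|Hq]; [exact Hq|].
        assert (0 < Q * D * (pm - x)) by (apply Rmult_lt_0_compat; lra). lra.
      - assert (0 <= Q * D * (x - pm)) by (apply Rmult_le_pos; lra). lra. }
    unfold p_opt. fold pm.
    assert (Epmax : p_max prm V Q g = Rmin (Rmax x 0) (p_Pbar prm)) by reflexivity.
    rewrite Epmax in *. clearbody x Opm pm T D a.
    destruct (Rle_dec pm (Rmin (Rmax x 0) (p_Pbar prm))) as [Hle|Hgt].
    + split; [lra|].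
      assert (Hpx : pm <= x).
      { assert (Hm := Rmin_l (Rmax x 0) (p_Pbar prm)).
        destruct (Rle_dec x 0) as [Hx0|Hx0].
        - rewrite Rmax_right in Hm, Hle by lra. lra.
        - rewrite Rmax_left in Hm, Hle by lra. lra. }
      apply Hx in Hpx.
      intros p Hp. rewrite Hobjpm.
      destruct (Rlt_le_dec p pm) as [Hlt|Hge].
      * assert (Hb := Hbelow p ltac:(lra) Hlt). lra.
      * apply Habove; auto.
    + split; [lra|].
      intros p Hp. rewrite obj_0.
      destruct (Rlt_le_dec p pm) as [Hlt|Hge].
      * apply Hbelow; lra.
      * assert (Hpx : x < pm).
        { unfold Rmin, Rmax in Hgt.
          destruct (Rle_dec x 0); destruct (Rle_dec _ _); lra. }
        assert (0 < Opm).
        { destruct (Rle_dec Opm 0) as [H|H]; [apply Hx in H; lra | lra]. }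
        assert (Ha' := Habove p Hge). lra.
Qed.
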